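(* Let $V$ be a finite-dimensional real Hilbert space with inner product $\langle\cdot,\cdot\rangle$, let $M\subset V$ be a convex open subset, and let $f\in C^1(M,V)$ satisfy (i) there exists $A_0\in M$ such that the Fréchet derivative $Df[A_0]$ is positive definite; (ii) for every $A\in M$, $Df[A]$ is invertible and self-adjoint. Then $\langle Df[A].H,\,H\rangle>0$ for all $A\in M$ and all $H\in V\setminus\{0\}$, and consequently $f$ is strictly monotone on $M$, i.e. $\langle f(A)-f(B),\,A-B\rangle>0$ for all $A\neq B$ in $M$.
   Context: $Df[A]\in L(V,V)$ denotes the Fréchet derivative of $f$ at $A$; it is positive definite if $\langle Df[A].H,H\rangle>0$ for all $H\neq 0$. *)

(* Defs.v *)
(* V = 'rV[R]_n equipped with an ARBITRARY inner
   product <u,v> = u Q v^T, Q symmetric positive definite (every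
   finite-dimensional real inner product space is of this form). *)
From HB Require Import structures.
From mathcomp Require Import all_boot all_order all_algebra.
From mathcomp Require Import all_classical all_reals all_analysis.
Set Implicit Arguments. Unset Strict Implicit. Unset Printing Implicit Defensive.
Import Order.TTheory GRing.Theory Num.Theory.
Import numFieldNormedType.Exports.
Local Open Scope classical_set_scope.
Local Open Scope ring_scope.

Section Defs.
Variables (R : realType) (n : nat).
Implicit Types (Q : 'M[R]_n) (u v : 'rV[R]_n).

Definition ip Q u v : R := (u *m Q *m v^T) 0 0.

Definition is_inner_product Q : Prop :=
  Q^T = Q /\ (forall u, u != 0 -> 0 < ip Q u u).

Definition posdef_op Q (L : 'rV[R]_n -> 'rV[R]_n) : Prop :=
  forall H, H != 0 -> 0 < ip Q (L H) H.

Definition selfadjoint_op Q (L : 'rV[R]_n -> 'rV[R]_n) : Prop :=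
  forall H K, ip Q (L H) K = ip Q H (L K).

Definition convex_subset (M : set 'rV[R]_n) : Prop :=
  forall A B (t : R), M A -> M B -> 0 <= t <= 1 -> M (t *: A + (1 - t) *: B).

Definition C1_on (M : set 'rV[R]_n) (f : 'rV[R]_n -> 'rV[R]_n) : Prop :=
  (forall A, M A -> differentiable f A) /\
  {in M, continuous (fun A => lin1_mx ('d f A))}.
End Defs.

(* Main.v *)
Require Import Defs.
From HB Require Import structures.
From mathcomp Require Import all_boot all_order all_algebra.
From mathcomp Require Import all_classical all_reals all_analysis.
From mathcomp Require Import ring lra.
Import Order.TTheory GRing.Theory Num.Theory.
Import numFieldNormedType.Exports.
Local Open Scope classical_set_scope.
Local Open Scope ring_scope.
Set Implicit Arguments. Unset Strict Implicit. Unset Printing Implicit Defensive.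

Section Aux.
Variables (R : realType) (n : nat).
Implicit Types (P Q : 'M[R]_n) (u v X Y Z : 'rV[R]_n).

Definition bil P u v : R := (u *m P *m v^T) 0 0.
Definition esq u : R := (u *m u^T) 0 0.
Definition Nsum P : R := \sum_k \sum_i `|P i k|.

Lemma bilE P u v : bil P u v = \sum_k (\sum_i u 0 i * P i k) * v 0 k.
Proof. rewrite /bil mxE; apply: eq_bigr => k _; rewrite !mxE; congr (_ * _). Qed.

Lemma esqE u : esq u = \sum_k u 0 k ^+ 2.
Proof. rewrite /esq mxE; apply: eq_bigr => k _; by rewrite !mxE expr2. Qed.

Lemma esq_entry u k : u 0 k ^+ 2 <= esq u.
Proof.
rewrite esqE (bigD1 k) //= lerDl; apply: sumr_ge0 => i _; exact: sqr_ge0.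
Qed.

Lemma esq_ge0 u : 0 <= esq u.
Proof. rewrite esqE; apply: sumr_ge0 => i _; exact: sqr_ge0. Qed.

Lemma esq_gt0 u : u != 0 -> 0 < esq u.
Proof.
move=> u0; rewrite lt_neqAle esq_ge0 andbT; apply: contra u0 => /eqP e0.
apply/eqP/rowP => k; rewrite mxE.
have := esq_entry u k; rewrite -e0 => h.
have : u 0 k ^+ 2 = 0 by apply/eqP; rewrite eq_le h sqr_ge0.
by move/eqP; rewrite sqrf_eq0 => /eqP.
Qed.

Lemma bil_bound P u : `|bil P u u| <= Nsum P * esq u.
Proof.
rewrite bilE /Nsum [X in _ <= X]mulr_suml; apply: le_trans (ler_norm_sum _ _ _) _.
apply: ler_sum => k _; rewrite [X in _ <= X]mulr_suml [X in `|X|]mulr_suml.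
apply: le_trans (ler_norm_sum _ _ _) _; apply: ler_sum => i _.
rewrite !normrM.
have hP := normr_ge0 (P i k).
have h1 := esq_entry u i; have h2 := esq_entry u k; have h0 := esq_ge0 u.
rewrite -(real_normK (num_real (u 0 i))) in h1; rewrite -(real_normK (num_real (u 0 k))) in h2.
have a0 := normr_ge0 (u 0 i); have b0 := normr_ge0 (u 0 k).
have hab : `|u 0 i| * `|u 0 k| <= esq u by nra.
rewrite mulrC mulrA [_ * `|u 0 i|]mulrC -mulrA mulrA [X in X <= _]mulrC; exact: ler_wpM2l.
Qed.

Lemma bilDl P X Y Z : bil P (X + Y) Z = bil P X Z + bil P Y Z.
Proof. by rewrite /bil !mulmxDl mxE. Qed.
Lemma bilDr P X Y Z : bil P Z (X + Y) = bil P Z X + bil P Z Y.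
Proof. by rewrite /bil linearD /= mulmxDr mxE. Qed.
Lemma bilZl P a X Z : bil P (a *: X) Z = a * bil P X Z.
Proof. by rewrite /bil -!scalemxAl mxE. Qed.
Lemma bilZr P a X Z : bil P Z (a *: X) = a * bil P Z X.
Proof. by rewrite /bil linearZ /= -scalemxAr mxE. Qed.
Lemma bilNl P X Z : bil P (- X) Z = - bil P X Z.
Proof. by rewrite -scaleN1r bilZl mulN1r. Qed.
Lemma bilNr P X Z : bil P Z (- X) = - bil P Z X.
Proof. by rewrite -scaleN1r bilZr mulN1r. Qed.

Lemma bil_expand P a b X Y :
  bil P (a *: X - b *: Y) (a *: X - b *: Y) =
  a ^+ 2 * bil P X X - a * b * (bil P X Y + bil P Y X) + b ^+ 2 * bil P Y Y.
Proof.
rewrite !(bilDl, bilDr, bilNl, bilNr, bilZl, bilZr); ring.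
Qed.


Lemma bil0 P : bil P 0 0 = 0.
Proof. by rewrite /bil mul0mx mul0mx mxE. Qed.

Lemma ip_bil Q (L : {linear 'rV[R]_n -> 'rV[R]_n}) u v :
  ip Q (L u) v = bil (lin1_mx L *m Q) u v.
Proof. by rewrite /ip /bil -mul_rV_lin1 mulmxA. Qed.

Lemma ip_sym Q u v : Q^T = Q -> ip Q u v = ip Q v u.
Proof.
move=> QT; have tr (A : 'M[R]_1) : A 0 0 = A^T 0 0 by rewrite mxE.
by rewrite /ip tr !trmx_mul trmxK QT mulmxA.
Qed.

Lemma bil_sym Q (L : {linear 'rV[R]_n -> 'rV[R]_n}) X Y :
  Q^T = Q -> selfadjoint_op Q L ->
  bil (lin1_mx L *m Q) X Y = bil (lin1_mx L *m Q) Y X.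
Proof.
move=> QT sa; rewrite -!ip_bil sa ip_sym //.
Qed.

Lemma pd_psd P : (forall X, X != 0 -> 0 < bil P X X) -> forall X, 0 <= bil P X X.
Proof.
move=> pd X; have [->|X0] := eqVneq X 0; first by rewrite bil0.
exact/ltW/pd.
Qed.

Lemma coercive Q (L : {linear 'rV[R]_n -> 'rV[R]_n}) :
  Q^T = Q -> selfadjoint_op Q L -> posdef_op Q L ->
  exists2 c, 0 < c & forall H, c * esq H <= bil (lin1_mx L *m Q) H H.
Proof.
move=> QT sa pd; set P := lin1_mx L *m Q.
have pdP X : X != 0 -> 0 < bil P X X by move=> X0; rewrite -ip_bil; exact: pd.
have Pu : P \in unitmx.
  rewrite unitmxE unitfE; apply/negP => /det0P [v v0 vP].
  by have := pdP v v0; rewrite /bil vP mul0mx mxE ltxx.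
set B := (invmx P)^T.
have NB0 : 0 <= Nsum B.
  by apply: sumr_ge0 => i _; apply: sumr_ge0 => j _; exact: normr_ge0.
exists (Nsum B + 1)^-1; first by rewrite invr_gt0; lra.
move=> H; set K := H *m B.
have hK : bil P H K = esq H.
  by rewrite /bil /esq /K trmx_mul /B trmxK mulmxA -(mulmxA H P) mulmxV // mulmx1.
have hKK : bil P K K = bil B H H.
  rewrite /bil /K trmx_mul /B trmxK -/B.
  by rewrite !mulmxA -(mulmxA (H *m B) (lin1_mx L) Q) -/P -(mulmxA (H *m B) P) mulmxV // mulmx1.
have hs : bil P K H = bil P H K by rewrite /P bil_sym.
have h0 := pd_psd pdP ((Nsum B + 1) *: H - 1 *: K).
rewrite bil_expand hs hK hKK in h0.
have hb := bil_bound B H; have he := esq_ge0 H.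
have hb' : bil B H H <= Nsum B * esq H by exact: le_trans (ler_norm _) hb.
set b := bil P H H in h0 *; set e := esq H in h0 hb' he *.
set N := Nsum B in NB0 h0 hb' *.
have hNb : e <= (N + 1) * b by nra.
rewrite mulrC ler_pdivrMr; last lra.
by rewrite mulrC.
Qed.

Lemma psd_pd Q (L : {linear 'rV[R]_n -> 'rV[R]_n}) :
  Q^T = Q -> (forall u, u != 0 -> 0 < ip Q u u) -> selfadjoint_op Q L ->
  injective L -> (forall H, 0 <= ip Q (L H) H) -> posdef_op Q L.
Proof.
move=> QT Qpd sa inj psd H H0; rewrite lt_neqAle psd andbT; apply/eqP => h0.
have K0 : L H != 0.
  apply: contra H0 => /eqP LH; apply/eqP; apply: inj; by rewrite LH linear0.
have hx := Qpd _ K0.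
set P := lin1_mx L *m Q.
have h1 := psd ((bil P (L H) (L H) + 1) *: H - ip Q (L H) (L H) *: L H).
rewrite ip_bil bil_expand -/P in h1.
have e1 : bil P H H = 0 by rewrite /P -ip_bil h0.
have e2 : bil P H (L H) = ip Q (L H) (L H) by rewrite /P -ip_bil.
have e3 : bil P (L H) H = ip Q (L H) (L H) by rewrite /P bil_sym // -ip_bil.
have hk : 0 <= bil P (L H) (L H) by rewrite /P -ip_bil; exact: psd.
rewrite e1 e2 e3 in h1.
set x := ip Q (L H) (L H) in hx h1.
set k := bil P (L H) (L H) in hk h1.
clearbody x k; move: hx hk h1; clear; move=> hx hk h1; nra.
Qed.


Lemma entry_le m p (Y : 'M[R]_(m, p)) i j : `|Y i j| <= `|Y|.
Proof.
rewrite [leRHS]/Num.norm /= mx_normrE; apply/bigmax_geP; right => /=.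
by exists (i, j).
Qed.

Lemma bilDP P1 P2 u v : bil (P1 + P2) u v = bil P1 u v + bil P2 u v.
Proof. by rewrite /bil mulmxDr mulmxDl mxE. Qed.

Lemma perturb P1 P2 H : bil P1 H H - Nsum (P2 - P1) * esq H <= bil P2 H H.
Proof.
have -> : P2 = P1 + (P2 - P1) by rewrite addrC subrK.
rewrite bilDP [P1 + _]addrC addrK lerD2l.
by have := bil_bound (P2 - P1) H; rewrite ler_norml => /andP[h _].
Qed.

Lemma perturb2 P1 P2 H : bil P2 H H <= bil P1 H H + Nsum (P2 - P1) * esq H.
Proof.
have -> : P2 = P1 + (P2 - P1) by rewrite addrC subrK.
rewrite bilDP [P1 + _]addrC addrK lerD2l.
by have := bil_bound (P2 - P1) H; rewrite ler_norml => /andP[_ h].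
Qed.

Lemma Nsum_mul (Y : 'M[R]_n) Q :
  Nsum (Y *m Q) <= `|Y| * \sum_(k < n) \sum_(i < n) \sum_(l < n) `|Q l k|.
Proof.
rewrite /Nsum mulr_sumr; apply: ler_sum => k _; rewrite mulr_sumr.
apply: ler_sum => i _; rewrite mxE mulr_sumr.
apply: le_trans (ler_norm_sum _ _ _) _; apply: ler_sum => l _.
by rewrite normrM ler_wpM2r // entry_le.
Qed.

Lemma Nsum_ge0 P : 0 <= Nsum P.
Proof. by apply: sumr_ge0 => i _; apply: sumr_ge0 => j _; exact: normr_ge0. Qed.

Lemma cont_step (F : R -> 'M[R]_n) t0 Q :
  {for t0, continuous F} -> forall e, 0 < e ->
  exists2 d, 0 < d & forall s, `|s - t0| < d -> Nsum (F s *m Q - F t0 *m Q) < e.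
Proof.
move=> cF e e0.
set C := \sum_(k < n) \sum_(i < n) \sum_(l < n) `|Q l k| + 1.
have C0 : 0 < C.
  rewrite /C ltr_wpDl //; do 3!(apply: sumr_ge0 => ? _); exact: normr_ge0.
have /cvgrPdist_lt /(_ (e / C)) : F @ t0 --> F t0 by exact: cF.
move=> /(_ (divr_gt0 e0 C0)) /nbhs_ballP [d d0 hd].
exists d => // s hs.
have := hd s; rewrite -ball_normE /= distrC => /(_ hs) h.
rewrite -mulmxBl; apply: le_lt_trans (Nsum_mul _ _) _.
rewrite distrC in h.
apply: (@le_lt_trans _ _ (`|F s - F t0| * C)).
  by rewrite ler_wpM2l // /C lerDl.
by rewrite -ltr_pdivlMr.
Qed.


Lemma seg_eq (A B : 'rV[R]_n) t : t *: (A - B) + B = t *: A + (1 - t) *: B.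
Proof. by rewrite scalerBr scalerBl scale1r addrA addrAC. Qed.

Lemma seg_cont (D B : 'rV[R]_n) : continuous (fun t : R => t *: D + B).
Proof.
move=> t; apply: (@continuousD _ _ _ (fun t : R => t *: D) (fun=> B)).
  exact: scalel_continuous.
exact: cst_continuous.
Qed.


Lemma arith_contra (a b c eta : R) : 0 < a -> a <= b + c -> c < eta -> eta = - b -> False.
Proof. lra. Qed.

Lemma arith_pos (a b c E K : R) : c * E <= b -> b - a <= K -> a < c * E -> 0 < K.
Proof. lra. Qed.


Lemma arith_hsd (s ts t d : R) : 0 < d -> ts <= s -> s <= t -> t <= ts + d / 2 ->
  `|s - ts| < d.
Proof. move=> *; rewrite ltr_norml; apply/andP; split; lra. Qed.

End Aux.

Unset Implicit Arguments. Set Strict Implicit.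

Lemma part1 (R : realType) (n : nat) (Q : 'M[R]_n)
  (M : set 'rV[R]_n) (f : 'rV[R]_n -> 'rV[R]_n) A0 A :
  is_inner_product Q -> convex_subset M -> C1_on M f ->
  M A0 -> posdef_op Q ('d f A0) ->
  (forall A, M A -> bijective ('d f A) /\ selfadjoint_op Q ('d f A)) ->
  M A -> posdef_op Q ('d f A).
Proof.
move=> [QT Qpd] cvx [_ C1] MA0 pd0 hyp MA.
pose g t := t *: (A - A0) + A0.
have gM t : 0 <= t <= 1 -> M (g t) by move=> ht; rewrite /g seg_eq; exact: cvx.
pose F t := lin1_mx ('d f (g t)).
pose P t := F t *m Q.
pose PD t := forall H, H != 0 -> 0 < bil (P t) H H.
have PDe t : PD t <-> posdef_op Q ('d f (g t)).
  by split => h H H0; [rewrite ip_bil; exact: h | rewrite -ip_bil; exact: h].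
have cont t0 : 0 <= t0 <= 1 -> forall e, 0 < e ->
    exists2 d, 0 < d & forall s, `|s - t0| < d -> Nsum (P s - P t0) < e.
  move=> ht0; apply: cont_step.
  apply: (continuous_comp (f := g) (g := fun B => lin1_mx ('d f B))).
    exact: seg_cont.
  by apply: C1; rewrite inE; exact: gM.
have g0 : g 0 = A0 by rewrite /g scale0r add0r.
have g1 : g 1 = A by rewrite /g scale1r subrK.
have PD0 : PD 0 by apply/PDe; rewrite g0.
pose S := [set t | (0 <= t <= 1) /\ forall s, 0 <= s <= t -> PD s].
have S0 : S 0.
  split; first by rewrite lexx ler01.
  move=> s /andP[s0 s1]; have -> : s = 0 by apply/eqP; rewrite eq_le s1 s0.
  exact: PD0.
have Sub : ubound S 1 by move=> t [/andP[_ ->]].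
have hasS : has_sup S by split; [exists 0 | exists 1].
set ts := sup S.
have ts0 : 0 <= ts by exact: sup_upper_bound.
have ts1 : ts <= 1 by apply: ge_sup => //; exists 0.
have below s : 0 <= s < ts -> PD s.
  move=> /andP[s0 sts].
  have hp : 0 < ts - s by rewrite subr_gt0.
  have [x [_ Sx] hx] := sup_adherent hp hasS.
  apply: Sx; rewrite s0 /=; move: hx; rewrite /ts; lra.
have PDts : PD ts.
  case: (leP ts 0) => [tsle0|tspos].
    by have -> : ts = 0 by apply/eqP; rewrite eq_le tsle0 ts0.
  have hts : 0 <= ts <= 1 by rewrite ts0 ts1.
  apply/PDe; have [bij sa] := hyp _ (gM ts hts).
  apply: psd_pd => //; first exact: bij_inj.
  move=> H; rewrite ip_bil; change (0 <= bil (P ts) H H).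
  rewrite leNgt; apply/negP => hneg.
  have H0 : H != 0 by apply: contraTneq hneg => ->; rewrite bil0 ltxx.
  have E0 := esq_gt0 H0.
  set eta := - bil (P ts) H H.
  have eta0 : 0 < eta by rewrite /eta oppr_gt0.
  set e := eta / (esq H + 1).
  have e0 : 0 < e by rewrite /e divr_gt0 //; lra.
  have [d d0 hd] := cont ts hts e e0.
  set m := Num.min d ts.
  have m1 : m <= ts by rewrite /m ge_min lexx orbT.
  have m2 : m <= d by rewrite /m ge_min lexx.
  have m0 : 0 < m by rewrite /m lt_min d0 tspos.
  set s := ts - m / 2.
  have hs : 0 <= s < ts by apply/andP; split; rewrite /s; lra.
  have hsd : `|s - ts| < d by rewrite ltr_norml /s; apply/andP; split; lra.
  have h1 := below s hs H H0.
  have h2 := perturb2 (P ts) (P s) H.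
  have hN := hd s hsd.
  have hN0 := Nsum_ge0 (P s - P ts).
  have k1 : Nsum (P s - P ts) * esq H <= e * esq H.
    by rewrite ler_wpM2r // ?esq_ge0 // ltW.
  have k2 : e * esq H < eta.
    have E1 : 0 < esq H + 1 by rewrite ltr_wpDl // ?esq_ge0.
    rewrite /e mulrAC ltr_pdivrMr //.
    by rewrite ltr_pM2l // ltrDl ltr01.
  exact: arith_contra h1 h2 (le_lt_trans k1 k2) erefl.
have ts_eq1 : ts = 1.
  apply/eqP; rewrite eq_le ts1 /= leNgt; apply/negP => tslt1.
  have hts : 0 <= ts <= 1 by rewrite ts0 ts1.
  have [bij sa] := hyp _ (gM ts hts).
  have [c c0 hc] := coercive QT sa ((PDe ts).1 PDts).
  have [d d0 hd] := cont ts hts c c0.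
  set t' := Num.min 1 (ts + d / 2).
  have t'1 : t' <= 1 by rewrite /t' ge_min lexx.
  have t'2 : t' <= ts + d / 2 by rewrite /t' ge_min lexx orbT.
  have t'3 : ts < t' by rewrite /t' lt_min tslt1 /= ltrDl divr_gt0.
  have St' : S t'.
    split; first by rewrite t'1 andbT (le_trans ts0 (ltW t'3)).
    move=> s /andP[s0 st']; case: (ltP s ts) => [slt|sge].
      by apply: below; rewrite s0 slt.
    move=> H H0.
    have hsd : `|s - ts| < d by apply: arith_hsd t'2.
    have E0 := esq_gt0 H0.
    have h1 := perturb (P ts) (P s) H.
    have hN := hd s hsd.
    have k1 : Nsum (P s - P ts) * esq H < c * esq H by rewrite ltr_pM2r.
    have h3 := hc H.
    exact: arith_pos h3 h1 k1.
  by have := sup_upper_bound hasS St'; rewrite -/ts leNgt t'3.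
have := (PDe 1).1; rewrite g1; apply; rewrite -ts_eq1; exact: PDts.
Qed.


Lemma ipBl (R : realType) (n : nat) (Q : 'M[R]_n) x y D :
  ip Q (x - y) D = ip Q x D - ip Q y D.
Proof. by rewrite /ip !mulmxBl !mxE. Qed.

Lemma ip_cont (R : realType) (n : nat) (Q : 'M[R]_n) (D : 'rV[R]_n) :
  exists h : {linear 'rV[R]_n -> R}, (forall y, h y = ip Q y D) /\ continuous h.
Proof.
pose W := Q *m D^T.
pose h0 := fun y : 'rV[R]_n => (y *m W) 0 0.
have h0_lin : linear h0.
  by move=> a u v; rewrite /h0 mulmxDl -scalemxAl !mxE.
pose hL : {linear 'rV[R]_n -> R} := HB.pack h0 (GRing.isLinear.Build _ _ _ _ h0 h0_lin).
exists hL; split; first by move=> y; rewrite /= /h0 /ip mulmxA.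
apply: bounded_linear_continuous; apply/bounded_funP => r.
exists (r * \sum_k `|W k 0|) => x xr.
rewrite /= /h0 mxE; apply: le_trans (ler_norm_sum _ _ _) _.
rewrite mulr_sumr; apply: ler_sum => k _; rewrite normrM ler_wpM2r //.
exact: le_trans (entry_le _ _ _) xr.
Qed.

Lemma part2 (R : realType) (n : nat) (Q : 'M[R]_n)
  (M : set 'rV[R]_n) (f : 'rV[R]_n -> 'rV[R]_n) :
  convex_subset M -> C1_on M f ->
  (forall A, M A -> posdef_op Q ('d f A)) ->
  forall A B, M A -> M B -> A != B -> 0 < ip Q (f A - f B) (A - B).
Proof.
move=> cvx [C1d _] pd A B MA MB AB.
set D := A - B.
have D0 : D != 0 by rewrite /D subr_eq0.
pose g : R -> 'rV[R]_n := ( *:%R^~ D) + cst B.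
have gE t : g t = t *: D + B by [].
have gM (t : R) : 0 <= t <= 1 -> M (g t) by move=> ht; rewrite gE /D seg_eq; exact: cvx.
have [h [hE hc]] := @ip_cont _ _ Q D.
pose psi := h \o (f \o g).
have dpsi (x : R) : 0 <= x <= 1 ->
    is_diff x psi (h \o ('d f (g x) \o (( *:%R^~ D) + 0))).
  move=> hx.
  have Hg : is_diff x g (( *:%R^~ D) + 0).
    exact: is_diffD.
  have Hf : is_diff (g x) f ('d f (g x)).
    by apply: DiffDef => //; exact: C1d (gM x hx).
  have Hh : is_diff (f (g x)) h h.
    apply: DiffDef; first exact: linear_differentiable.
    exact: diff_lin.
  exact: is_diff_comp.
have der (x : R) : 0 <= x <= 1 -> is_derive x 1 psi (ip Q ('d f (g x) D) D).
  move=> hx; have dp := dpsi x hx.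
  apply: DeriveDef; first exact: diff_derivable.
  rewrite deriveE // diff_val /= hE; congr (ip Q (_ _) D).
  by rewrite -[LHS]/(1 *: D + 0) scale1r addr0.
have [c c01 hmvt] : exists2 c, c \in `]0, 1[%R &
    psi 1 - psi 0 = ip Q ('d f (g c) D) D * (1 - 0).
  apply: MVT; first exact: ltr01.
    move=> x; rewrite in_itv /= => /andP[x0 x1]; apply: der.
    by rewrite !ltW.
  apply: continuous_in_subspaceT => x; rewrite inE /= in_itv /= => hx.
  have dp := dpsi x hx; have dpx : differentiable psi x by exact: ex_diff.
  exact: differentiable_continuous dpx.
have e1 : psi 1 - psi 0 = ip Q (f A - f B) D.
  by rewrite /psi /= !hE !gE scale1r scale0r add0r subrK ipBl.
suff : 0 < psi 1 - psi 0 by rewrite e1.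
rewrite hmvt subr0 mulr1.
move: c01; rewrite in_itv /= => /andP[c0 c1].
apply: (pd _ (gM c _)) => //; by rewrite !ltW.
Qed.

Theorem lemma1p1 (R : realType) (n : nat) (Q : 'M[R]_n)
  (M : set 'rV[R]_n) (f : 'rV[R]_n -> 'rV[R]_n) :
  is_inner_product Q ->
  convex_subset M -> open M -> C1_on M f ->
  (exists A0, M A0 /\ posdef_op Q ('d f A0)) ->
  (forall A, M A -> bijective ('d f A) /\ selfadjoint_op Q ('d f A)) ->
  (forall A, M A -> posdef_op Q ('d f A)) /\
  (forall A B, M A -> M B -> A != B -> 0 < ip Q (f A - f B) (A - B)).
Proof.
move=> ipQ cvx _ C1 [A0 [MA0 pd0]] hyp.
have P1 : forall A, M A -> posdef_op Q ('d f A).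
  by move=> A MA; exact: (@part1 _ _ Q M f A0 A ipQ cvx C1 MA0 pd0 hyp MA).
split => //.
exact: (@part2 _ _ Q M f cvx C1 P1).
Qed.
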